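(* For the Ewens distribution $p^\star$, $p^\star_N(\pi)=\frac{\prod_{B\in\pi}(b-1)!}{n!}$, the restriction operator $r^\star:=r^{p^\star}$ is given by $$w^{r^\star}_{-i}(S,\pi)=\frac{1}{n-s}w(S,\pi_{+i\leadsto\emptyset})+\sum_{B\in\pi}\frac{b}{n-s}w(S,\pi_{+i\leadsto B})$$ for all $N\subseteq\mathbf{U}$, $w\in\mathbb{W}(N)$, $i\in N$, $(S,\pi)\in\mathcal{E}(N\setminus\{i\})$. Moreover, the $r^\star$-Shapley value coincides with the MPW solution: $\mathrm{Sh}^{r^\star}=\mathrm{MPW}$.
   Context: $\mathbf{U}$ is a finite set of players; cardinalities of $N,S,B$ are $n,s,b$. $\Pi(N)$ is the set of partitions of $N$ ($\Pi(\emptyset)=\{\emptyset\}$). A random partition is $p=(p_N)_{N\subseteq\mathbf{U}}$ with $p_N$ a probability distribution on $\Pi(N)$. $\pi_{+i\leadsto B}=(\pi\setminus\{B\})\cup\{B\cup\{i\}\}$ for $B\in\pi$; $\pi_{+i\leadsto\emptyset}=\pi\cup\{\{i\}\}$. Embedded coalitions $\mathcal{E}(N)=\{(S,\pi):S\subseteq N,\pi\in\Pi(N\setminus S)\}$; a TUX game on $N$ is $w:\mathcal{E}(N)\to\mathbb{R}$ with $w(\emptyset,\pi)=0$, $\mathbb{W}(N)$ their set. For a positive random partition $p$, $r^p$ is the restriction operator $w^{r^p}_{-i}(S,\pi)=\frac{n}{n-s}\sum_{B\in\pi\cup\{\emptyset\}}\frac{p_N(\{S\}\cup\pi_{+i\leadsto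 B})}{p_{N\setminus\{i\}}(\{S\}\cup\pi)}w(S,\pi_{+i\leadsto B})$, which yields $w^{r^p}_{-i}\in\mathbb{W}(N\setminus\{i\})$ and is path independent, so $w^{r}_{-T}$ is well defined for $T\subseteq N$. The Shapley value of a TU game $v$ on $N$ is $\mathrm{Sh}_i(v)=\sum_{S\subseteq N\setminus\{i\}}\frac{s!(n-s-1)!}{n!}(v(S\cup\{i\})-v(S))$. For a path independent restriction operator $r$, the $r$-Shapley value is $\mathrm{Sh}^r(w)=\mathrm{Sh}(v^r_w)$ with $v^r_w(S)=w^r_{-(N\setminus S)}(S,\emptyset)$. The MPW solution is $\mathrm{MPW}(w)=\mathrm{Sh}(\bar v^\star_w)$ with $\bar v^\star_w(S)=\sum_{\pi\in\Pi(N\setminus S)}p^\star_{N\setminus S}(\pi)w(S,\pi)$. *)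

(* Defs.v *)
From HB Require Import structures.
From mathcomp Require Import all_boot all_order all_algebra.
Set Implicit Arguments. Unset Strict Implicit. Unset Printing Implicit Defensive.
Import Order.TTheory GRing.Theory Num.Theory.
Local Open Scope ring_scope.

Section Defs.
Variables (U : finType) (R : realFieldType).

(* Partitions of N: {set {set U}} with mathcomp's [partition P N]
   (cover P = N, pairwise disjoint blocks, no empty block).
   Pi(set0) = {set0}. *)

Definition rpart := {set U} -> {set {set U}} -> R.

(* A TUX game (on some N) is represented as a total function on pairs
   (S, pi); only its values on embedded coalitions E(N) matter. *)
Definition tux := {set U} -> {set {set U}} -> R.

Definition tux_game (N : {set U}) (w : tux) : Prop :=
  forall pi : {set {set U}}, partition pi N -> w set0 pi = 0.

(* pi_{+i ~> B} ; B = set0 encodes the empty-set case. *)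
Definition plus_to (pi : {set {set U}}) (i : U) (B : {set U}) : {set {set U}} :=
  if B == set0 then pi :|: [set [set i]]
  else (pi :\ B) :|: [set B :|: [set i]].

Definition ewens : rpart := fun N pi =>
  (\prod_(B in pi) (#|B|.-1)`!)%:R / (#|N|)`!%:R.

Definition restr (p : rpart) (N : {set U}) (i : U) (w : tux) : tux :=
  fun S pi =>
    (#|N|%:R / (#|N| - #|S|)%:R) *
    \sum_(B in pi :|: [set set0])
       (p N ([set S] :|: plus_to pi i B) / p (N :\ i) ([set S] :|: pi))
       * w S (plus_to pi i B).

(* Iterated restriction w^r_{-T}, removing the players of the sequence
   in order (path independence makes the order irrelevant). *)
Fixpoint restr_seq (p : rpart) (N : {set U}) (w : tux) (s : seq U) : tux :=
  match s with
  | [::] => w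
  | i :: s' => restr_seq p (N :\ i) (restr p N i w) s'
  end.

Definition restrT (p : rpart) (N : {set U}) (w : tux) (T : {set U}) : tux :=
  restr_seq p N w (enum T).

Definition shapley (N : {set U}) (v : {set U} -> R) (i : U) : R :=
  \sum_(S in powerset (N :\ i))
    ((#|S|)`! * (#|N| - #|S| - 1)`!)%:R / (#|N|)`!%:R
      * (v (S :|: [set i]) - v S).

Definition v_r (p : rpart) (N : {set U}) (w : tux) : {set U} -> R :=
  fun S => restrT p N w (N :\: S) S set0.

Definition r_shapley (p : rpart) (N : {set U}) (w : tux) (i : U) : R :=
  shapley N (v_r p N w) i.

Definition vbar_star (N : {set U}) (w : tux) : {set U} -> R :=
  fun S => \sum_(pi : {set {set U}} | partition pi (N :\: S))
             ewens (N :\: S) pi * w S pi.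

Definition MPW (N : {set U}) (w : tux) (i : U) : R :=
  shapley N (vbar_star N w) i.

End Defs.

(* Main.v *)
Require Import Defs.
From HB Require Import structures.
From mathcomp Require Import all_boot all_order all_algebra.
From mathcomp Require Import ring lra.
Import Order.TTheory GRing.Theory Num.Theory.
Local Open Scope ring_scope.
Set Implicit Arguments. Unset Strict Implicit.

Section Part.
Variables (U : finType).
Implicit Types (A B S N : {set U}) (tau sigma : {set {set U}}).

Lemma plus_to_partition A i tau B : i \notin A -> partition tau A ->
  B \in tau :|: [set set0] -> partition (plus_to tau i B) (A :|: [set i]).
Proof.
move=> iA pt; rewrite /plus_to; case: (B =P set0) => [-> _ | /eqP B0].
  rewrite setUC [A :|: _]setUC; apply: partitionU1 => //.
    by apply/set0Pn; exists i; rewrite inE.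
  by rewrite disjoints1.
rewrite !inE (negbTE B0) orbF => Bt.
have sBA := partitionS pt Bt.
rewrite setUC; have -> : A :|: [set i] = (B :|: [set i]) :|: (A :\: B).
  apply/setP => x; rewrite !inE; have := subsetP sBA x.
  by case: (x \in B); case: (x \in A); case: (x == i) => //= ->.
apply: partitionU1; first exact: partitionD1.
  by apply/set0Pn; exists i; rewrite !inE eqxx orbT.
rewrite -setI_eq0; apply/eqP/setP => x; rewrite !inE.
case: (x =P i) => [->|_]; first by rewrite (negbTE iA) !andbF.
by case: (x \in B).
Qed.

Definition psi i sigma : {set {set U}} * {set U} :=
  let P := pblock sigma i in
  let B := P :\ i in
  (if B == set0 then sigma :\ P else B |: (sigma :\ P), B).

Lemma psi_partition A i sigma : i \notin A -> partition sigma (A :|: [set i]) ->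
  partition (psi i sigma).1 A && ((psi i sigma).2 \in (psi i sigma).1 :|: [set set0]).
Proof.
move=> iA ps; rewrite /psi /=.
have ic : i \in cover sigma by rewrite (cover_partition ps) !inE eqxx orbT.
set P := pblock sigma i.
have Ps : P \in sigma by exact: pblock_mem.
have iP : i \in P by rewrite mem_pblock.
have sPA := partitionS ps Ps.
have pD := partitionD1 ps Ps.
case: (P :\ i =P set0) => [B0 | /eqP B0].
  rewrite B0 !inE eqxx orbT andbT.
  have -> : A = (A :|: [set i]) :\: P; last by [].
  apply/setP => x; rewrite !inE.
  have : x \in P :\ i = false by rewrite B0 inE.
  rewrite !inE; case: (x =P i) => [->|_] /=; first by rewrite (negbTE iA) iP.
  by move->; rewrite orbF.
rewrite !inE eqxx andbT.
have -> : A = (P :\ i) :|: ((A :|: [set i]) :\: P).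
  apply/setP => x; rewrite !inE; have := subsetP sPA x; rewrite !inE.
  case: (x =P i) => [->|_] /=; first by rewrite (negbTE iA) iP.
  by rewrite ?orbF; case: (x \in P) => //= ->.
apply: partitionU1 => //.
rewrite -setI_eq0; apply/eqP/setP => x; rewrite !inE.
by case: (x \in P); rewrite !andbF.
Qed.

Lemma plus_psi A i sigma : i \notin A -> partition sigma (A :|: [set i]) ->
  plus_to (psi i sigma).1 i (psi i sigma).2 = sigma.
Proof.
move=> iA ps; rewrite /psi /plus_to /=.
have ic : i \in cover sigma by rewrite (cover_partition ps) !inE eqxx orbT.
set P := pblock sigma i.
have Ps : P \in sigma by exact: pblock_mem.
have iP : i \in P by rewrite mem_pblock.
case: (P :\ i =P set0) => [B0 | /eqP B0].
  have -> : [set i] = P.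
    apply/setP => x; rewrite !inE.
    have : x \in P :\ i = false by rewrite B0 inE.
    rewrite !inE; case: (x =P i) => [->|_] //=; by move->.
  by rewrite setUC setD1K.

have BnotS : P :\ i \notin sigma :\ P.
  rewrite !inE negb_and negbK; apply/orP; case: (_ =P _) => [->|/eqP ne]; [by left|right].
  apply/negP => Bs.
  move/trivIsetP: (partition_trivIset ps) => tP; have := tP _ _ Bs Ps ne.
  rewrite -setI_eq0 => /eqP dj; move/set0Pn: B0 => [x xB].
  have : x \in (P :\ i) :&: P by rewrite inE xB; move: xB; rewrite !inE => /andP[].
  by rewrite dj inE.
rewrite setU1K //.
have -> : (P :\ i) :|: [set i] = P.
  apply/setP => x; rewrite !inE; case: (x =P i) => [->|] //=; by rewrite orbF.
by rewrite setUC setD1K.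
Qed.

Lemma psi_plus A i tau B : i \notin A -> partition tau A ->
  B \in tau :|: [set set0] -> psi i (plus_to tau i B) = (tau, B).
Proof.
move=> iA pt HB.
have ps := plus_to_partition iA pt HB.
have tr := partition_trivIset ps.
have notiT : [set i] \notin tau.
  apply/negP => it; have := partitionS pt it; move/subsetP/(_ i).
  by rewrite inE eqxx => /(_ isT); rewrite (negbTE iA).
move: HB ps tr; rewrite /psi /plus_to; case: (B =P set0) => [-> _ ps tr | /eqP B0].
  rewrite (@def_pblock _ _ [set i]) //; last 2 first.
  - by rewrite !inE eqxx orbT.
  - by rewrite inE.
  rewrite setDv eqxx; congr pair; by rewrite setUC setU1K.
rewrite !inE (negbTE B0) orbF => Bt ps tr.
have sBA := partitionS pt Bt.
have iB : i \notin B by apply: contra iA; apply: (subsetP sBA).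
rewrite (@def_pblock _ _ (B :|: [set i])) //; last 2 first.
- by rewrite in_setU set11 orbT.
- by rewrite !inE eqxx orbT.
have -> : (B :|: [set i]) :\ i = B.
  apply/setP => x; rewrite !inE; case: (x =P i) => [->|] //=; first by rewrite (negbTE iB).
  by rewrite orbF.
rewrite (negbTE B0); congr pair.
rewrite [tau :\ B :|: _]setUC setU1K ?setD1K //.
rewrite !inE negb_and negbK; apply/orP; right; apply/negP => Bit.
have := partitionS pt Bit; move/subsetP/(_ i).
by rewrite !inE eqxx orbT => /(_ isT); rewrite (negbTE iA).
Qed.

Lemma partition_split (R : Type) (idx : R) (op : Monoid.com_law idx) A i (f : {set {set U}} -> R) :
  i \notin A ->
  \big[op/idx]_(sigma | partition sigma (A :|: [set i])) f sigma =
  \big[op/idx]_(tau | partition tau A) \big[op/idx]_(B in tau :|: [set set0]) f (plus_to tau i B).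
Proof.
move=> iA.
rewrite (reindex_onto (fun p : {set {set U}} * {set U} => plus_to p.1 i p.2) (psi i));
  last by move=> s; apply: plus_psi.
rewrite (pair_big_dep (fun tau => partition tau A) (fun tau B => B \in tau :|: [set set0])
   (fun tau B => f (plus_to tau i B))).
apply: eq_bigl => [[tau B]] /=.
apply/idP/idP.
  move=> /andP[ps /eqP e]; have := psi_partition iA ps; by rewrite e.
move=> /andP[pt HB]; rewrite plus_to_partition //= (psi_plus iA pt HB) //.
Qed.
End Part.

Section Alg.
Variables (U : finType) (R : realFieldType).
Implicit Types (A B S N : {set U}) (tau sigma : {set {set U}}).

Lemma notin_part (X : {set {set U}}) D S : partition X D -> [disjoint S & D] -> S \notin X.
Proof.
move=> pX dj; apply/negP => SX.
have sSD := partitionS pX SX.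
have := partition_neq0 pX SX; apply/negP; rewrite negbK.
by rewrite -(setIidPl sSD); rewrite -setI_eq0 in dj.
Qed.

Lemma natr_neq0 k : (0 < k)%N -> (k%:R : R) != 0.
Proof. by rewrite pnatr_eq0 -lt0n. Qed.

Lemma prod_fact_gt0 (X : {set {set U}}) : (0 < \prod_(C in X) (#|C|.-1)`!)%N.
Proof. by apply: prodn_gt0 => C; apply: fact_gt0. Qed.

Lemma restr_step N i (w : tux U R) S tau : i \in N -> S \subset N :\ i ->
  partition tau ((N :\ i) :\: S) ->
  restr (@ewens U R) N i w S tau =
  \sum_(B in tau :|: [set set0])
     (@ewens U R (N :\: S) (plus_to tau i B) / @ewens U R ((N :\ i) :\: S) tau)
     * w S (plus_to tau i B).
Proof.
move=> iN sS pt.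
have iA : i \notin (N :\ i) :\: S by rewrite !inE eqxx /= !andbF.
have sSN : S \subset N by apply: subset_trans sS (subsetDl _ _).
have iS : i \notin S by apply/negP => /(subsetP sS); rewrite !inE eqxx.
have eNS : N :\: S = ((N :\ i) :\: S) :|: [set i].
  apply/setP => x; rewrite !inE; case: (x =P i) => [->|] /=; first by rewrite iN (negbTE iS).
  by rewrite orbF.
rewrite /restr big_distrr; apply: eq_bigr => B HB /=; rewrite mulrA; congr (_ * _).
have pphi := plus_to_partition iA pt HB.
have Sphi : S \notin plus_to tau i B.
  apply: (notin_part pphi); rewrite -setI_eq0; apply/eqP/setP => x; rewrite !inE.
  case xS: (x \in S) => //=; apply/negbTE/eqP => xi; by rewrite -xi xS in iS.
have Stau : S \notin tau.
  apply: (notin_part pt); rewrite -setI_eq0; apply/eqP/setP => x; rewrite !inE.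
  by case: (x \in S); rewrite ?andbF.
rewrite /ewens !big_setU1 //=.
have [m Em] : exists m, #|N| = m.+1.
  by exists #|N|.-1; rewrite prednK // (cardsD1 i N) iN.
have cNi : #|N :\ i| = m by move: Em; rewrite (cardsD1 i N) iN => -[].
have sm : (#|S| <= m)%N by rewrite -cNi subset_leq_card.
have c1 : #|N :\: S| = (m - #|S|)%N.+1.
  by rewrite cardsD (setIidPr sSN) Em subSn.
have c2 : #|(N :\ i) :\: S| = (m - #|S|)%N.
  by rewrite cardsD (setIidPr sS) cNi.
rewrite Em cNi c1 c2 subSn // !factS !natrM.
have h1 := natr_neq0 (fact_gt0 (#|S|.-1)).
have h2 := natr_neq0 (prod_fact_gt0 tau).
have h3 := natr_neq0 (fact_gt0 m).
have h4 := natr_neq0 (fact_gt0 (m - #|S|)%N).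
have h5 := natr_neq0 (ltn0Sn m).
have h6 := natr_neq0 (ltn0Sn (m - #|S|)%N).
field.
by rewrite !nat1r h1 h2 h3 h4 h5 h6.
Qed.


Lemma ewens_neq0 A tau : @ewens U R A tau != 0.
Proof.
rewrite /ewens mulf_neq0 ?invr_eq0 ?natr_neq0 ?fact_gt0 //.
exact: prod_fact_gt0.
Qed.

Lemma restr_seq_ewens s N (w : tux U R) S : uniq s -> S \subset N ->
  [set x in s] = N :\: S ->
  restr_seq (@ewens U R) N w s S set0 =
  \sum_(sigma | partition sigma (N :\: S)) @ewens U R (N :\: S) sigma * w S sigma.
Proof.
elim: s N w => [|i s IH] N w /= us sSN es.
  rewrite -es.
  have -> : [set x in [::]] = set0 :> {set U} by apply/setP => x; rewrite !inE.
  rewrite (eq_bigl (pred1 set0)); last by move=> sg; rewrite partition_set0.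
  by rewrite big_pred1_eq /ewens big_set0 cards0 /= divr1 mul1r.
move/andP: us => [nis us].
have iNS : i \in N :\: S by rewrite -es inE mem_head.
have iN : i \in N by move: iNS; rewrite inE => /andP[].
have iS : i \notin S by move: iNS; rewrite inE => /andP[].
have sS : S \subset N :\ i.
  apply/subsetP => x xS; rewrite !inE (subsetP sSN x xS) andbT.
  by apply/negP => /eqP xi; rewrite -xi xS in iS.
have es' : [set x in s] = (N :\ i) :\: S.
  have -> : (N :\ i) :\: S = (N :\: S) :\ i.
    by apply/setP => x; rewrite !inE; case: (x == i); case: (x \in S).
  rewrite -es; apply/setP => x; rewrite !inE.
  case: (x =P i) => [->|] /=; first by rewrite (negbTE nis).
  by [].
rewrite (IH _ _ us sS es').
have iA : i \notin (N :\ i) :\: S by rewrite !inE eqxx /= !andbF.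
have eNS : N :\: S = ((N :\ i) :\: S) :|: [set i].
  apply/setP => x; rewrite !inE; case: (x =P i) => [->|] /=; first by rewrite iN (negbTE iS).
  by rewrite orbF.
transitivity (\sum_(tau | partition tau ((N :\ i) :\: S))
   \sum_(B in tau :|: [set set0]) @ewens U R (N :\: S) (plus_to tau i B) * w S (plus_to tau i B)).
  apply: eq_bigr => tau pt; rewrite (restr_step w iN sS pt) big_distrr.
  apply: eq_bigr => B _ /=; rewrite mulrA; congr (_ * _).
  by rewrite mulrC divfK // ewens_neq0.
rewrite eNS (@partition_split U R 0 +%R _ i _ iA).
by [].
Qed.

Lemma part2 N (w : tux U R) i : i \in N ->
  r_shapley (@ewens U R) N w i = MPW N w i.
Proof.
move=> iN; rewrite /r_shapley /MPW /shapley; apply: eq_bigr => S.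
rewrite inE => sS.
have sSN : S \subset N by apply: subset_trans sS (subsetDl _ _).
have sSiN : S :|: [set i] \subset N.
  by rewrite subUset sSN sub1set.
have E : forall X : {set U}, X \subset N -> v_r (@ewens U R) N w X = vbar_star N w X.
  move=> X sX; rewrite /v_r /restrT /vbar_star.
  by apply: restr_seq_ewens => //; [exact: enum_uniq | exact: set_enum].
by rewrite !E.
Qed.


Lemma part1 N (w : tux U R) i S pi : i \in N -> S \subset N :\ i ->
  partition pi ((N :\ i) :\: S) ->
  restr (@ewens U R) N i w S pi =
       1 / (#|N| - #|S|)%:R * w S (plus_to pi i set0)
       + \sum_(B in pi) (#|B|%:R / (#|N| - #|S|)%:R) * w S (plus_to pi i B).
Proof.
move=> iN sS pt.
rewrite (restr_step w iN sS pt) setUC big_setU1 /=; last by rewrite (partition0 pt).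
have iA : i \notin (N :\ i) :\: S by rewrite !inE eqxx /= !andbF.
have sSN : S \subset N by apply: subset_trans sS (subsetDl _ _).
have [m Em] : exists m, #|N| = m.+1.
  by exists #|N|.-1; rewrite prednK // (cardsD1 i N) iN.
have cNi : #|N :\ i| = m by move: Em; rewrite (cardsD1 i N) iN => -[].
have sm : (#|S| <= m)%N by rewrite -cNi subset_leq_card.
have c1 : #|N :\: S| = (m - #|S|).+1.
  by rewrite cardsD (setIidPr sSN) Em subSn.
have c2 : #|(N :\ i) :\: S| = (m - #|S|)%N.
  by rewrite cardsD (setIidPr sS) cNi.
have cd : (#|N| - #|S|)%N = (m - #|S|).+1 by rewrite Em subSn.
have h2 := natr_neq0 (prod_fact_gt0 pi).
have h4 := natr_neq0 (fact_gt0 (m - #|S|)%N).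
have h6 := natr_neq0 (ltn0Sn (m - #|S|)%N).
have notiT : [set i] \notin pi.
  apply/negP => it; have := partitionS pt it; move/subsetP/(_ i).
  by rewrite inE eqxx => /(_ isT); rewrite (negbTE iA).
congr (_ * _ + _).
  rewrite /ewens /plus_to eqxx setUC big_setU1 //= cards1 /= mul1n c1 c2 cd factS natrM.
  field; by rewrite !nat1r h2 h4 h6.
apply: eq_bigr => B Bp; congr (_ * _).
have B0 := partition_neq0 pt Bp.
have sBA := partitionS pt Bp.
have iB : i \notin B by apply: contra iA; apply: (subsetP sBA).
have Bni : B :|: [set i] \notin pi :\ B.
  rewrite !inE negb_and negbK; apply/orP; right; apply/negP => Bit.
  have := partitionS pt Bit; move/subsetP/(_ i).
  by rewrite in_setU in_set1 eqxx orbT => /(_ isT); rewrite (negbTE iA).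
have [k Ek] : exists k, #|B| = k.+1.
  by exists #|B|.-1; rewrite prednK // card_gt0.
have cBi : #|B :|: [set i]| = k.+2 by rewrite setUC cardsU1 iB Ek.
rewrite /ewens /plus_to (negbTE B0) setUC big_setU1 //= (big_setD1 B Bp) /=.
rewrite cBi Ek c1 c2 cd /= !factS !natrM.
have h7 := natr_neq0 (prod_fact_gt0 (pi :\ B)).
have h8 := natr_neq0 (fact_gt0 k).
field; by rewrite !nat1r h4 h6 h7 h8.
Qed.

End Alg.

Theorem lemma1 (U : finType) (R : realFieldType) :
  (forall (N : {set U}) (w : tux U R), tux_game N w ->
   forall i : U, i \in N ->
   forall (S : {set U}) (pi : {set {set U}}),
     S \subset N :\ i -> partition pi ((N :\ i) :\: S) ->
     restr (@ewens U R) N i w S pi =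
       1 / (#|N| - #|S|)%:R * w S (plus_to pi i set0)
       + \sum_(B in pi) (#|B|%:R / (#|N| - #|S|)%:R) * w S (plus_to pi i B))
  /\
  (forall (N : {set U}) (w : tux U R), tux_game N w ->
   forall i : U, i \in N ->
     r_shapley (@ewens U R) N w i = MPW N w i).
Proof.
split.
  move=> N w _ i iN S pi sS pt; exact: part1.
move=> N w _ i iN; exact: part2.
Qed.
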